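(* Let $G$ be a finite graph with $\mathrm{Aut}(G)\neq\{\mathrm{id}\}$, and let $\alpha\in\mathrm{Aut}(G)\setminus\{\mathrm{id}\}$ be such that $c(\alpha)=\max\{c(\beta):\beta\in\mathrm{Aut}(G)\}$ (equivalently $\theta(G)=c(\alpha)+1$). Then there is a prime number $p$ such that $\alpha$ has order $p$. In particular, every cycle of $\alpha$ has length $p$ or $1$.
   Context: All graphs are finite and simple. For a permutation $\alpha$ of $V(G)$, $c(\alpha)$ denotes the number of cycles in the cycle decomposition of $\alpha$, fixed points counting as cycles of length 1, with the convention $c(\mathrm{id})=0$. The distinguishing threshold $\theta(G)$ of a graph $G$ is the minimum number $k$ such that every vertex coloring of $G$ using exactly $k$ colors is distinguishing (i.e. no non-identity automorphism of $G$ maps every vertex to a vertex of the same color); equivalently, $\theta(G)=1+\max\{c(\alpha):\alpha\in\mathrm{Aut}(G)\}$. *)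

(* Defs.v *)
From mathcomp Require Import all_boot all_order all_fingroup.
Set Implicit Arguments.
Unset Strict Implicit.
Unset Printing Implicit Defensive.

(* A finite simple graph is a symmetric irreflexive relation e on a finType T
   (symmetry/irreflexivity are hypotheses of the theorem). *)

Definition is_aut (T : finType) (e : rel T) (s : {perm T}) : bool :=
  [forall x, forall y, e (s x) (s y) == e x y].

(* c(s): number of cycles of s (fixed points count as 1-cycles),
   with the convention c(id) = 0. *)
Definition ncycles (T : finType) (s : {perm T}) : nat :=
  if s == 1%g then 0 else #|porbits s|.

(* Main.v *)
Require Import Defs.
From mathcomp Require Import all_boot all_order all_fingroup.
From mathcomp Require Import cyclic.

Section Aux.
Variable T : finType.
Implicit Types (s : {perm T}) (x : T).

Lemma iterL s x q : iter (q * #|porbit s x|) s x = x.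
Proof.
elim: q => [|q IH] //=; by rewrite mulSn iterD IH iter_porbit.
Qed.

Lemma fix_small s x i : i < #|porbit s x| -> (s ^+ i)%g x = x -> i = 0.
Proof.
move=> Hi Hfx; apply/eqP; move: (uniq_traject_porbit s x) => U.
have H0 : 0 < #|porbit s x| by rewrite lt0n card_porbit_neq0.
have Hi' : i < size (traject s x #|porbit s x|) by rewrite size_traject.
have H0' : 0 < size (traject s x #|porbit s x|) by rewrite size_traject.
have := nth_uniq x Hi' H0' U.
by rewrite !nth_traject // -permX Hfx /= eqxx => <-.
Qed.

Lemma permX_dvd s x k : ((s ^+ k)%g x == x) = (#|porbit s x| %| k).
Proof.
have H0 : 0 < #|porbit s x| by rewrite lt0n card_porbit_neq0.
have E : (s ^+ k)%g x = (s ^+ (k %% #|porbit s x|))%g x.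
  by rewrite {1}(divn_eq k #|porbit s x|) addnC !permX iterD iterL.
apply/eqP/idP => [Hf|Hd].
  rewrite /dvdn; apply/eqP; apply: (@fix_small s x); first exact: ltn_pmod.
  by rewrite -E.
by rewrite E (eqP Hd) expg0 perm1.
Qed.

Lemma permX_eq s x i j : (s ^+ i)%g x = (s ^+ j)%g x -> i = j %[mod #|porbit s x|].
Proof.
wlog le_ij : i j / i <= j.
  move=> W; case/orP: (leq_total i j) => H E; first exact: W.
  by symmetry; apply: W => //; rewrite E.
move=> E; apply/eqP; rewrite eq_sym eqn_mod_dvd // -permX_dvd.
move: E; rewrite -{1}(subnKC le_ij) addnC expgD permM => E.
by apply/eqP; apply: (@perm_inj _ (s ^+ i)%g); rewrite -E.
Qed.
End Aux.

Lemma is_autM (T : finType) (e : rel T) (a b : {perm T}) :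
  is_aut e a -> is_aut e b -> is_aut e (a * b)%g.
Proof.
move=> /forallP Ha /forallP Hb; apply/forallP => x; apply/forallP => y.
rewrite !permM (eqP (forallP (Hb (a x)) (a y))).
exact: (forallP (Ha x)).
Qed.

Lemma is_autX (T : finType) (e : rel T) (a : {perm T}) k :
  is_aut e a -> is_aut e (a ^+ k)%g.
Proof.
move=> Ha; elim: k => [|k IH].
  by rewrite expg0; apply/forallP => x; apply/forallP => y; rewrite !perm1.
by rewrite expgS; apply: is_autM.
Qed.

Lemma porbitX_sub (T : finType) (s : {perm T}) k x :
  porbit (s ^+ k)%g x \subset porbit s x.
Proof.
apply/subsetP => y /porbitP [i ->]; rewrite -expgM; exact: mem_porbit.
Qed.

Lemma pick_orb (T : finType) (s : {perm T}) k x y :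
  porbit s (odflt x [pick z in porbit (s ^+ k)%g y]) = porbit s y.
Proof.
case: pickP => [z Hz|H] /=; last by move: (H y); rewrite porbit_id.
apply/eqP; rewrite eq_porbit_mem; exact: (subsetP (@porbitX_sub _ s k y)).
Qed.

Lemma porbits_lt (T : finType) (s : {perm T}) p x :
  prime p -> p %| #|porbit s x| -> #|porbits s| < #|porbits (s ^+ p)%g|.
Proof.
move=> pp pL.
set f := fun Q : {set T} => porbit s (odflt x [pick z in Q]).
have Himg : f @: porbits (s ^+ p)%g = porbits s.
  apply/setP => Q; apply/imsetP/imsetP => [[R /imsetP [y _ ->] ->]|[y _ ->]].
    by exists y => //; rewrite /f pick_orb.
  exists (porbit (s ^+ p)%g y); first by apply/imsetP; exists y.
  by rewrite /f pick_orb.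
rewrite -Himg ltn_neqAle leq_imset_card andbT.
apply/negP => /imset_injP Hinj.
have Hne : porbit (s ^+ p)%g x != porbit (s ^+ p)%g (s x).
  apply/negP; rewrite eq_sym eq_porbit_mem => /porbitP [i].
  rewrite -expgM -{1}(expg1 s) => /permX_eq H.
  have := congr1 (modn^~ p) H; rewrite !modn_dvdm // modn_small ?prime_gt1 //.
  by rewrite mulnC modnMl.
have Hx : porbit (s ^+ p)%g x \in porbits (s ^+ p)%g by apply/imsetP; exists x.
have Hsx : porbit (s ^+ p)%g (s x) \in porbits (s ^+ p)%g by apply/imsetP; exists (s x).
move/negP: Hne; apply; apply/eqP; apply: Hinj => //.
by rewrite /f !pick_orb; have := porbit_perm s 1 x; rewrite expg1 => ->.
Qed.


Theorem mainTheorem1 (T : finType) (e : rel T)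
  (e_sym : symmetric e) (e_irr : irreflexive e) (a : {perm T}) :
  is_aut e a -> a != 1%g ->
  (forall b : {perm T}, is_aut e b -> ncycles b <= ncycles a) ->
  exists p : nat, [/\ prime p, #[a]%g = p &
                     forall x : T, #|porbit a x| \in [:: p; 1]].
Proof.
move=> Ha a1 Hmax.
have HL : forall x, #|porbit a x| %| #[a]%g.
  by move=> x; rewrite -permX_dvd expg_order perm1.
have n0 := order_gt0 a.
have n1 : 1 < #[a]%g.
  by rewrite ltn_neqAle n0 andbT eq_sym order_eq1.
case: (boolP (prime #[a]%g)) => pn.
  exists #[a]%g; split => // x.
  case/primeP: pn => _ /(_ _ (HL x)) /orP [] /eqP ->; by rewrite !inE eqxx ?orbT.
exfalso.
set n := #[a]%g in n0 n1 pn HL.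
set p := pdiv n.
have pp : prime p by exact: pdiv_prime.
have pdn : p %| n by exact: pdiv_dvd.
have pltn : p < n.
  rewrite ltn_neqAle dvdn_leq // andbT; apply/negP => /eqP E.
  by move: pn; rewrite -E pp.
have np : n %/ p * p = n by exact: divnK.
have [x px] : exists x, p %| #|porbit a x|.
  case: (pickP (fun x => p %| #|porbit a x|)) => [x Hx|H]; first by exists x.
  have Hm : forall y, #|porbit a y| %| n %/ p.
    move=> y; have := HL y; rewrite -{1}np Gauss_dvdl //.
    by rewrite coprime_sym prime_coprime // H.
  have a_m : (a ^+ (n %/ p))%g = 1%g.
    by apply/permP => y; rewrite perm1; apply/eqP; rewrite permX_dvd.
  have : n %| n %/ p by rewrite order_dvdn a_m.
  move/dvdn_leq; rewrite divn_gt0 ?prime_gt0 // dvdn_leq // => /(_ isT).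
  by rewrite leqNgt ltn_Pdiv ?prime_gt1.
have b1 : (a ^+ p)%g != 1%g.
  apply/negP => /eqP E.
  have : n %| p by rewrite order_dvdn E.
  by move/dvdn_leq => /(_ (prime_gt0 pp)); rewrite leqNgt pltn.
have := Hmax _ (@is_autX _ _ _ p Ha).
rewrite /ncycles (negbTE a1) (negbTE b1) leqNgt.
by rewrite (@porbits_lt _ a p x pp px).
Qed.
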